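(* Let $n>3$. There exist functions $\rho,p:[0,\infty[\to]0,\infty[$ with the following properties. 1. Both $\rho$ and $p$ are $C^\infty$ functions of $r^2$. 2. $\rho'(r)<0$ for $r>0$, and $\rho''(0)<0$. 3. $\rho(r)=r^{-2n/(n-1)}$ for $r>1$. 4. With $m(r)=4\pi\int_0^r s^2\rho(s)\,ds$, one has $p(r)=\int_r^\infty s^{-2}m(s)\rho(s)\,ds$. In particular $p'(r)=-\rho(r)m(r)/r^2$, i.e. $(\rho,p)$ is a static spherically symmetric solution of the Euler–Poisson system. 5. There is a smooth function $F$ on $]0,\rho(0)[$ with $F'>0$ and $p(r)=F(\rho(r))$ for all $r>0$. 6. For $0<\rho<\rho(1)$, $$F(\rho)=\frac{4\pi(n-1)^2}{2(n+1)(n-3)}\,\rho^{(n+1)/n},$$ i.e. the equation of state is polytropic of index $n$ at low densities. Moreover, $m(r)=4\pi\frac{n-1}{n-3}r^{(n-3)/(n-1)}$ for $r>1$. Hence this steady state has unbounded support ($\rho>0$ everywhere) and infinite total mass. *)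

(* Defs.v *)
From Stdlib Require Import Reals.
From Coquelicot Require Import Coquelicot.
Open Scope R_scope.

Definition smooth (f : R -> R) : Prop :=
  forall (k : nat) (x : R), ex_derive_n f k x.

Definition smooth_on_open (f : R -> R) (a b : R) : Prop :=
  forall (k : nat) (x : R), a < x < b -> ex_derive_n f k x.

Definition mass (rho : R -> R) (r : R) : R :=
  4 * PI * RInt (fun s => s ^ 2 * rho s) 0 r.

(* Main.v *)
Require Import Defs.
From Stdlib Require Import Reals Lra Lia ClassicalEpsilon Ranalysis5.
From Coquelicot Require Import Coquelicot.
Open Scope R_scope.

Definition isOpen (U : R -> Prop) := forall x, U x -> locally x U.

Fixpoint Ck (U : R -> Prop) (k : nat) (f : R -> R) : Prop :=
  match k with
  | O => True
  | S k => (forall x, U x -> ex_derive f x) /\ Ck U k (Derive f)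
  end.

Lemma locally_and_U (U : R -> Prop) (P : R -> Prop) x :
  isOpen U -> U x -> (forall y, U y -> P y) -> locally x P.
Proof.
  intros HU Hx HP. eapply filter_imp; [|apply (HU x Hx)]. exact HP.
Qed.

Lemma Ck_ext U k : isOpen U -> forall f g, (forall x, U x -> f x = g x) -> Ck U k f -> Ck U k g.
Proof.
  intros HU; induction k as [|k IH]; intros f g Hfg Hf; simpl in *; auto.
  destruct Hf as [H1 H2]; split.
  - intros x Hx. apply (ex_derive_ext_loc f). 2: now apply H1.
    apply (locally_and_U U); auto.
  - apply (IH (Derive f)); auto. intros x Hx. apply Derive_ext_loc.
    apply (locally_and_U U); auto.
Qed.

Lemma Ck_mono U k f : Ck U (S k) f -> Ck U k f.
Proof.
  revert f; induction k as [|k IH]; intros f Hf; simpl in *; auto.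
  destruct Hf as [H1 H2]; split; auto.
Qed.

Lemma Ck_le U k j f : (j <= k)%nat -> Ck U k f -> Ck U j f.
Proof.
  intros H; induction H; auto. intros Hf; apply IHle, Ck_mono, Hf.
Qed.

Lemma Ck_sub U V k f : (forall x, V x -> U x) -> Ck U k f -> Ck V k f.
Proof.
  intros HVU; revert f; induction k as [|k IH]; intros f Hf; simpl in *; auto.
  destruct Hf; split; auto.
Qed.


Lemma Ck_const U k : isOpen U -> forall c, Ck U k (fun _ => c).
Proof.
  intros HU; induction k as [|k IH]; intros c; simpl; auto. split.
  - intros; apply ex_derive_const.
  - apply (Ck_ext U k HU (fun _ => 0)); auto.
    intros x _; rewrite Derive_const; auto.
Qed.

Lemma Ck_plus U k : isOpen U -> forall f g, Ck U k f -> Ck U k g -> Ck U k (fun x => f x + g x).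
Proof.
  intros HU; induction k as [|k IH]; intros f g Hf Hg; simpl in *; auto.
  destruct Hf as [Hf1 Hf2], Hg as [Hg1 Hg2]; split.
  - intros x Hx; apply (ex_derive_plus f g); auto.
  - apply (Ck_ext U k HU (fun x => Derive f x + Derive g x)); auto.
    intros x Hx; rewrite Derive_plus; auto.
Qed.

Lemma Ck_scal U k : isOpen U -> forall c f, Ck U k f -> Ck U k (fun x => c * f x).
Proof.
  intros HU; induction k as [|k IH]; intros c f Hf; simpl in *; auto.
  destruct Hf as [Hf1 Hf2]; split.
  - intros x Hx; apply (ex_derive_scal f); auto.
  - apply (Ck_ext U k HU (fun x => c * Derive f x)); auto.
    intros x Hx; rewrite Derive_scal; auto.
Qed.

Lemma Ck_opp U k : isOpen U -> forall f, Ck U k f -> Ck U k (fun x => - f x).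
Proof.
  intros HU f Hf. apply (Ck_ext U k HU (fun x => (-1) * f x)).
  intros; ring. now apply Ck_scal.
Qed.

Lemma Ck_mult U k : isOpen U -> forall f g, Ck U k f -> Ck U k g -> Ck U k (fun x => f x * g x).
Proof.
  intros HU; induction k as [|k IH]; intros f g Hf Hg; simpl in *; auto.
  pose proof (Ck_mono U k f Hf) as Hfm. pose proof (Ck_mono U k g Hg) as Hgm.
  destruct Hf as [Hf1 Hf2], Hg as [Hg1 Hg2]; split.
  - intros x Hx; apply (ex_derive_mult f g); auto.
  - apply (Ck_ext U k HU (fun x => Derive f x * g x + f x * Derive g x)); auto.
    intros x Hx; rewrite Derive_mult; auto.
    apply Ck_plus; auto.
Qed.

Lemma Ck_comp U V k : isOpen U -> isOpen V -> forall phi f, (forall x, U x -> V (f x)) ->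
  Ck V k phi -> Ck U k f -> Ck U k (fun x => phi (f x)).
Proof.
  intros HU HV; induction k as [|k IH]; intros phi f HUV Hp Hf; simpl in *; auto.
  pose proof (Ck_mono U k f Hf) as Hfm. pose proof (Ck_mono V k phi Hp) as Hpm.
  destruct Hf as [Hf1 Hf2], Hp as [Hp1 Hp2]; split.
  - intros x Hx; apply (ex_derive_comp phi f); auto.
  - apply (Ck_ext U k HU (fun x => Derive f x * Derive phi (f x))); auto.
    intros x Hx; rewrite (Derive_comp phi f); auto.
    apply Ck_mult; auto.
Qed.

Lemma Ck_id U k : isOpen U -> Ck U k (fun x => x).
Proof.
  intros HU; destruct k as [|k]; simpl; auto. split.
  - intros; apply ex_derive_id.
  - apply (Ck_ext U k HU (fun _ => 1)); auto.
    intros; rewrite Derive_id; auto. apply Ck_const; auto.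
Qed.

Lemma Ck_exp U k : isOpen U -> Ck U k exp.
Proof.
  intros HU; induction k as [|k IH]; simpl; auto. split.
  - intros x _; eexists; apply is_derive_exp.
  - apply (Ck_ext U k HU exp); auto.
    intros x _; symmetry; apply is_derive_unique, is_derive_exp.
Qed.

Definition Rpos (x : R) := 0 < x.
Definition Rneg (x : R) := x < 0.
Definition Rall (x : R) := True.

Lemma open_Rpos : isOpen Rpos.
Proof.
  intros x Hx. unfold Rpos in *. exists (mkposreal x Hx). intros y Hy.
  unfold ball in Hy; simpl in Hy; unfold AbsRing_ball, abs, minus, plus, opp in Hy; simpl in Hy.
  apply Rabs_lt_between in Hy; lra.
Qed.
Lemma open_Rneg : isOpen Rneg.
Proof.
  intros x Hx. unfold Rneg in *. assert (Hx' : 0 < -x) by lra.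
  exists (mkposreal _ Hx'). intros y Hy.
  unfold ball in Hy; simpl in Hy; unfold AbsRing_ball, abs, minus, plus, opp in Hy; simpl in Hy.
  apply Rabs_lt_between in Hy; lra.
Qed.
Lemma open_Rall : isOpen Rall.
Proof. intros x _. apply filter_forall. intros; exact I. Qed.
Lemma open_interval a b : isOpen (fun x => a < x < b).
Proof.
  intros x Hx. assert (H : 0 < Rmin (x - a) (b - x)) by (apply Rmin_glb_lt; lra).
  exists (mkposreal _ H). intros y Hy.
  unfold ball in Hy; simpl in Hy; unfold AbsRing_ball, abs, minus, plus, opp in Hy; simpl in Hy.
  apply Rabs_lt_between in Hy. pose proof (Rmin_l (x-a) (b-x)). pose proof (Rmin_r (x-a) (b-x)). lra.
Qed.



Lemma is_derive_eq (f : R -> R) x l l' : is_derive f x l -> l = l' -> is_derive f x l'.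
Proof. intros H ->; exact H. Qed.

Lemma is_derive_Rinv x : x <> 0 -> is_derive (fun y => / y) x (- (/ x * / x)).
Proof.
  intros Hx. eapply is_derive_eq; [eapply (is_derive_inv (fun y => y)); [apply is_derive_id| exact Hx]|].
  unfold one; simpl. field. auto.
Qed.

Lemma Ck_inv_open U k : isOpen U -> (forall x, U x -> x <> 0) -> Ck U k (fun x => / x).
Proof.
  intros HU H0; induction k as [|k IH]; simpl; auto. split.
  - intros x Hx; eexists; apply is_derive_Rinv; auto.
  - apply (Ck_ext U k HU (fun x => - (/ x * / x))).
    + intros x Hx. symmetry; apply is_derive_unique, is_derive_Rinv; auto.
    + apply Ck_opp, Ck_mult; auto.
Qed.

Lemma Ck_ln k : Ck Rpos k ln.
Proof.
  destruct k as [|k]; simpl; auto. split.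
  - intros x Hx; eexists; apply is_derive_ln; exact Hx.
  - apply (Ck_ext Rpos k open_Rpos (fun x => / x)).
    + intros x Hx. symmetry; apply is_derive_unique, is_derive_ln; auto.
    + apply Ck_inv_open. apply open_Rpos. intros x Hx; unfold Rpos in Hx; lra.
Qed.

Lemma Ck_Rpower k y : Ck Rpos k (fun x => Rpower x y).
Proof.
  unfold Rpower. apply (Ck_comp Rpos Rall k open_Rpos open_Rall exp (fun x => y * ln x)).
  - intros; exact I.
  - apply Ck_exp, open_Rall.
  - apply Ck_scal. apply open_Rpos. apply Ck_ln.
Qed.

Lemma Ck_inv_comp U k f : isOpen U -> (forall x, U x -> f x <> 0) -> Ck U k f -> Ck U k (fun x => / f x).
Proof.
  intros HU Hf Ck_f.
  apply (Ck_comp U (fun y => y <> 0) k HU); auto.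
  - intros x Hx. destruct (Rlt_dec x 0).
    + assert (HR := open_Rneg x r). eapply filter_imp; [|exact HR]. intros y Hy; unfold Rneg in Hy; lra.
    + assert (Hp : 0 < x) by (destruct (Rtotal_order x 0) as [|[|]]; lra).
      assert (HR := open_Rpos x Hp). eapply filter_imp; [|exact HR]. intros y Hy; unfold Rpos in Hy; lra.
  - apply Ck_inv_open; auto.
    intros x Hx. destruct (Rlt_dec x 0).
    + assert (HR := open_Rneg x r). eapply filter_imp; [|exact HR]. intros y Hy; unfold Rneg in Hy; lra.
    + assert (Hp : 0 < x) by (destruct (Rtotal_order x 0) as [|[|]]; lra).
      assert (HR := open_Rpos x Hp). eapply filter_imp; [|exact HR]. intros y Hy; unfold Rpos in Hy; lra.
Qed.


Lemma Ck_ex_derive_n U k f : Ck U (S k) f -> forall x, U x -> ex_derive (Derive_n f k) x.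
Proof.
  revert f; induction k as [|k IH]; intros f Hf x Hx.
  - simpl in Hf. destruct Hf; simpl; auto.
  - simpl in Hf. destruct Hf as [H1 H2].
    apply (ex_derive_ext (Derive_n (Derive f) k)).
    + intros t. rewrite (Derive_n_comp f k 1). replace (k + 1)%nat with (S k) by lia. reflexivity.
    + apply IH; auto.
Qed.

Lemma Ck_smooth f : (forall k, Ck Rall k f) -> smooth f.
Proof.
  intros H k x. destruct k as [|k]; simpl; auto.
  apply (Ck_ex_derive_n Rall); auto. exact I.
Qed.

Lemma Ck_smooth_on f a b : (forall k, Ck (fun x => a < x < b) k f) -> smooth_on_open f a b.
Proof.
  intros H k x Hx. destruct k as [|k]; simpl; auto.
  apply (Ck_ex_derive_n (fun x => a < x < b)); auto.
Qed.

Lemma Ck_continuous U k f : Ck U (S k) f -> forall x, U x -> continuous f x.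
Proof. intros [H _] x Hx. apply (ex_derive_continuous f), H, Hx. Qed.

Definition E (i : nat) (x : R) : R :=
  if Rle_dec x 0 then 0 else exp (- / x) * / x ^ i.

Lemma fact_pos n : 0 < INR (Factorial.fact n).
Proof. apply lt_0_INR, Factorial.lt_O_fact. Qed.

Lemma exp_ge_pow (y : R) (m : nat) : 0 <= y -> y ^ m / INR (Factorial.fact m) <= exp y.
Proof.
  intros Hy. eapply Rle_trans; [|apply (exp_ge_taylor y m Hy)].
  destruct m as [|m].
  - simpl. lra.
  - rewrite tech5. assert (0 <= sum_f_R0 (fun k => y ^ k / INR (Factorial.fact k)) m).
    { apply cond_pos_sum. intros k. apply Rmult_le_pos. apply pow_le; auto.
      left; apply Rinv_0_lt_compat, fact_pos. }
    lra.
Qed.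

Lemma E_bound j x : 0 < x -> exp (- / x) * / x ^ j <= INR (Factorial.fact (S j)) * x.
Proof.
  intros Hx.
  pose proof (exp_ge_pow (/ x) (S j) ltac:(left; apply Rinv_0_lt_compat; auto)) as H.
  pose proof (fact_pos (S j)) as Hf.
  assert (Hxj : 0 < x ^ j) by (apply pow_lt; auto).
  rewrite exp_Ropp.
  assert (He : 0 < exp (/ x)) by apply exp_pos.
  rewrite pow_inv in H.
  apply (Rmult_le_reg_r (exp (/ x) * x ^ j)). apply Rmult_lt_0_compat; auto.
  replace (/ exp (/ x) * / x ^ j * (exp (/ x) * x ^ j)) with 1 by (field; lra).
  set (F := INR (Factorial.fact (S j))) in *.
  rewrite <- tech_pow_Rmult in H.
  apply (Rmult_le_compat_l (F * x * x ^ j)) in H.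
  2: { apply Rmult_le_pos; [apply Rmult_le_pos|]; lra. }
  replace (F * x * x ^ j * (/ (x * x ^ j) / F)) with 1 in H by (field; lra).
  lra.
Qed.

Lemma E_nonneg i x : 0 <= E i x.
Proof.
  unfold E. destruct (Rle_dec x 0); [lra|].
  apply Rmult_le_pos. left; apply exp_pos. left; apply Rinv_0_lt_compat, pow_lt; lra.
Qed.

Lemma E_pos i x : 0 < x -> 0 < E i x.
Proof.
  intros Hx. unfold E. destruct (Rle_dec x 0); [lra|].
  apply Rmult_lt_0_compat. apply exp_pos. apply Rinv_0_lt_compat, pow_lt; lra.
Qed.

Lemma E_zero i x : x <= 0 -> E i x = 0.
Proof. intros Hx. unfold E. destruct (Rle_dec x 0); lra. Qed.

Lemma E_derive i x : is_derive (E i) x (E (S (S i)) x - INR i * E (S i) x).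
Proof.
  destruct (Rtotal_order x 0) as [Hx|[Hx|Hx]].
  - rewrite !E_zero by lra.
    apply (is_derive_ext_loc (fun _ => 0)).
    + assert (H := open_Rneg x Hx). eapply filter_imp; [|exact H].
      intros y Hy; unfold Rneg in Hy. rewrite E_zero; lra.
    + eapply is_derive_eq; [apply is_derive_const|]. unfold zero; simpl; ring.
  - subst x. rewrite !E_zero by lra.
    apply is_derive_Reals. intros eps Heps.
    pose proof (fact_pos (S (S i))) as Hf.
    assert (Hd : 0 < eps / (INR (Factorial.fact (S (S i))) + 1)).
    { apply Rdiv_lt_0_compat; lra. }
    exists (mkposreal _ Hd). intros h Hh0 Hh.
    assert (Hh' : Rabs h < eps / (INR (Factorial.fact (S (S i))) + 1)) by exact Hh. clear Hh.
    rename Hh' into Hh.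
    rewrite (E_zero i 0) by lra. rewrite Rplus_0_l.
    destruct (Rle_dec h 0) as [Hn|Hp].
    + rewrite E_zero by lra. replace ((0 - 0) / h - (0 - INR i * 0)) with 0 by (field; auto).
      rewrite Rabs_R0; lra.
    + assert (Hp' : 0 < h) by lra. unfold E at 1. destruct (Rle_dec h 0); [lra|].
      assert (Hhi : h ^ i <> 0) by (apply pow_nonzero; lra).
      replace ((exp (- / h) * / h ^ i - 0) / h - (0 - INR i * 0)) with
        (exp (- / h) * / h ^ (S i)) by (rewrite <- tech_pow_Rmult; field; auto).
      rewrite Rabs_pos_eq.
      2: { apply Rmult_le_pos. left; apply exp_pos. left; apply Rinv_0_lt_compat, pow_lt; lra. }
      eapply Rle_lt_trans; [apply E_bound; auto|].
      rewrite Rabs_pos_eq in Hh by lra.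
      apply (Rmult_lt_compat_l (INR (Factorial.fact (S (S i))))) in Hh; auto.
      eapply Rlt_le_trans; [exact Hh|].
      unfold Rdiv. rewrite <- Rmult_assoc.
      apply (Rmult_le_reg_r (INR (Factorial.fact (S (S i))) + 1)); [lra|].
      rewrite Rmult_assoc, Rinv_l by lra. nra.
  - apply (is_derive_ext_loc (fun y => exp (- / y) * / y ^ i)).
    + assert (H := open_Rpos x Hx). eapply filter_imp; [|exact H].
      intros y Hy; unfold Rpos in Hy. unfold E. destruct (Rle_dec y 0); [lra|]. reflexivity.
    + unfold E. destruct (Rle_dec x 0); [lra|].
      auto_derive.
      * split; [lra|]. split; auto. apply pow_nonzero; lra.
      * assert (Hx0 : x <> 0) by lra.
        destruct i as [|j].
        -- simpl. field. auto.
        -- simpl Init.Nat.pred. assert (x ^ j <> 0) by (apply pow_nonzero; lra).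
           rewrite <- !tech_pow_Rmult. field. auto.
Qed.

Lemma Ck_E k : forall i, Ck Rall k (E i).
Proof.
  induction k as [|k IH]; intros i; simpl; auto. split.
  - intros x _. eexists; apply E_derive.
  - apply (Ck_ext Rall k open_Rall (fun x => E (S (S i)) x + (- INR i) * E (S i) x)).
    + intros x _. symmetry; apply is_derive_unique. eapply is_derive_eq; [apply E_derive|]. lra.
    + apply Ck_plus; [apply open_Rall| apply IH|]. apply Ck_scal; [apply open_Rall|apply IH].
Qed.

Definition psi := E 0.

Ltac rsimpl := unfold scal, plus, mult, opp, minus, zero, one; simpl; unfold mult; simpl.

Lemma psi_derive x : is_derive psi x (E 2 x).
Proof. eapply is_derive_eq; [apply (E_derive 0)|]. simpl. ring. Qed.

Lemma psi_lin_derive a b t : is_derive (fun t => psi (a * t + b)) t (a * E 2 (a * t + b)).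
Proof.
  eapply is_derive_eq.
  - apply (is_derive_comp psi (fun t => a * t + b)). apply psi_derive.
    auto_derive; auto.
  - rsimpl. ring.
Qed.

Lemma psi_nonneg x : 0 <= psi x.
Proof. apply E_nonneg. Qed.
Lemma psi_pos x : 0 < x -> 0 < psi x.
Proof. apply E_pos. Qed.
Lemma psi_zero x : x <= 0 -> psi x = 0.
Proof. apply E_zero. Qed.

Definition pa t := psi (4 * t + -3).
Definition pb t := psi ((-4) * t + 4).
Definition den t := pa t + pb t.
Definition chi t := pa t / den t.
Definition dchi t := (4 * E 2 (4 * t + -3) * pb t - pa t * ((-4) * E 2 ((-4) * t + 4))) / (den t) ^ 2.

Lemma den_pos t : 0 < den t.
Proof.
  unfold den, pa, pb. destruct (Rle_dec (4 * t + -3) 0).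
  - pose proof (psi_nonneg (4 * t + -3)). pose proof (psi_pos ((-4) * t + 4) ltac:(lra)). lra.
  - pose proof (psi_pos (4 * t + -3) ltac:(lra)). pose proof (psi_nonneg ((-4) * t + 4)). lra.
Qed.

Lemma chi_derive t : is_derive chi t (dchi t).
Proof.
  pose proof (den_pos t) as Hd.
  unfold chi, dchi.
  eapply is_derive_eq.
  - apply (is_derive_div pa den). apply psi_lin_derive.
    unfold den. apply (is_derive_plus pa pb). apply psi_lin_derive. apply psi_lin_derive. lra.
  - rsimpl. unfold den at 1. field. lra.
Qed.

Lemma chi_range t : 0 <= chi t <= 1.
Proof.
  pose proof (den_pos t). unfold chi. unfold den in *.
  pose proof (psi_nonneg (4 * t + -3)). pose proof (psi_nonneg ((-4) * t + 4)).
  fold (pa t) (pb t) in *. split.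
  - apply Rmult_le_pos; [lra|]. left; apply Rinv_0_lt_compat; lra.
  - apply (Rmult_le_reg_r (pa t + pb t)); [lra|]. unfold Rdiv. rewrite Rmult_assoc, Rinv_l by lra. lra.
Qed.

Lemma chi_low t : t <= 3/4 -> chi t = 0.
Proof. intros H. unfold chi, pa. rewrite psi_zero by lra. unfold Rdiv; ring. Qed.

Lemma chi_high t : 1 <= t -> chi t = 1.
Proof.
  intros H. pose proof (den_pos t). unfold chi, den in *. unfold pb in *. rewrite psi_zero in * by lra.
  field. lra.
Qed.

Lemma dchi_nonneg t : 0 <= dchi t.
Proof.
  unfold dchi. pose proof (den_pos t).
  pose proof (E_nonneg 2 (4 * t + -3)). pose proof (E_nonneg 2 ((-4) * t + 4)).
  pose proof (psi_nonneg (4 * t + -3)). pose proof (psi_nonneg ((-4) * t + 4)).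
  fold (pa t) (pb t) in *.
  apply Rmult_le_pos. 2: { left; apply Rinv_0_lt_compat, pow_lt; lra. }
  assert (0 <= 4 * E 2 (4 * t + -3) * pb t) by (apply Rmult_le_pos; lra).
  assert (0 <= pa t * (4 * E 2 ((-4) * t + 4))) by (apply Rmult_le_pos; lra).
  lra.
Qed.

Lemma dchi_low t : t <= 3/4 -> dchi t = 0.
Proof. intros H. unfold dchi, pa. rewrite (E_zero 2), psi_zero by lra. unfold Rdiv; ring. Qed.

Definition sig t := 3/5 + chi t * (t - 3/5).
Definition dsig t := dchi t * (t - 3/5) + chi t.

Lemma sig_derive t : is_derive sig t (dsig t).
Proof.
  unfold sig, dsig. eapply is_derive_eq.
  - apply (is_derive_plus (fun _ => 3/5) (fun t => chi t * (t - 3/5))). apply is_derive_const.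
    apply (is_derive_mult chi (fun t => t - 3/5)). apply chi_derive.
    auto_derive; auto. intros; apply Rmult_comm.
  - rsimpl. ring.
Qed.

Lemma sig_ge t : 3/5 <= sig t.
Proof.
  unfold sig. destruct (Rle_dec t (3/4)).
  - rewrite chi_low by lra. lra.
  - pose proof (chi_range t). assert (0 <= chi t * (t - 3/5)) by (apply Rmult_le_pos; lra). lra.
Qed.

Lemma sig_le1 t : t <= 1 -> sig t <= 1.
Proof.
  intros H. unfold sig. destruct (Rle_dec t (3/4)).
  - rewrite chi_low by lra. lra.
  - pose proof (chi_range t). assert (chi t * (t - 3/5) <= t - 3/5) by nra. lra.
Qed.

Lemma sig_high t : 1 <= t -> sig t = t.
Proof. intros H. unfold sig. rewrite chi_high by lra. ring. Qed.

Lemma dsig_nonneg t : 0 <= dsig t.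
Proof.
  unfold dsig. destruct (Rle_dec t (3/4)).
  - rewrite dchi_low, chi_low by lra. lra.
  - pose proof (chi_range t). pose proof (dchi_nonneg t).
    assert (0 <= dchi t * (t - 3/5)) by (apply Rmult_le_pos; lra). lra.
Qed.

Lemma dsig_high t : 1 <= t -> 0 < dsig t.
Proof.
  intros H. unfold dsig. rewrite chi_high by lra. pose proof (dchi_nonneg t).
  assert (0 <= dchi t * (t - 3/5)) by (apply Rmult_le_pos; lra). lra.
Qed.

Definition g0 b t := Rpower (sig t) (- b).
Definition dg0 b t := - b * Rpower (sig t) (- b - 1) * dsig t.
Definition phi t := psi ((-1) * t + 1).
Definition dphi t := (-1) * E 2 ((-1) * t + 1).
Definition gg b c t := g0 b t + c * phi t.
Definition dgg b c t := dg0 b t + c * dphi t.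

Lemma sig_pos t : 0 < sig t.
Proof. pose proof (sig_ge t). lra. Qed.

Lemma g0_derive b t : is_derive (g0 b) t (dg0 b t).
Proof.
  unfold g0, dg0. eapply is_derive_eq.
  - apply (is_derive_comp (fun x => Rpower x (-b)) sig). apply is_derive_Reals.
    apply derivable_pt_lim_power. apply sig_pos. apply sig_derive.
  - rsimpl. ring.
Qed.

Lemma gg_derive b c t : is_derive (gg b c) t (dgg b c t).
Proof.
  unfold gg, dgg. eapply is_derive_eq.
  - apply (is_derive_plus (g0 b) (fun t => c * phi t)). apply g0_derive.
    apply is_derive_scal. unfold phi, dphi. apply psi_lin_derive.
  - rsimpl. unfold dphi. ring.
Qed.

Lemma Rpower_pos x y : 0 < Rpower x y.
Proof. unfold Rpower. apply exp_pos. Qed.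

Lemma phi_nonneg t : 0 <= phi t.
Proof. apply psi_nonneg. Qed.

Lemma gg_pos b c t : 0 <= c -> 0 < gg b c t.
Proof.
  intros Hc. unfold gg, g0. pose proof (Rpower_pos (sig t) (-b)).
  pose proof (phi_nonneg t). assert (0 <= c * phi t) by (apply Rmult_le_pos; lra). lra.
Qed.

Lemma dgg_neg b c t : 0 < b -> 0 < c -> 0 <= t -> dgg b c t < 0.
Proof.
  intros Hb Hc Ht. unfold dgg, dg0, dphi.
  pose proof (Rpower_pos (sig t) (-b - 1)). pose proof (dsig_nonneg t).
  pose proof (E_nonneg 2 ((-1) * t + 1)).
  destruct (Rlt_dec t 1).
  - pose proof (E_pos 2 ((-1) * t + 1) ltac:(lra)).
    assert (0 <= b * Rpower (sig t) (-b - 1) * dsig t) by (apply Rmult_le_pos; [apply Rmult_le_pos|]; lra).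
    assert (0 < c * E 2 ((-1) * t + 1)) by (apply Rmult_lt_0_compat; lra).
    nra.
  - pose proof (dsig_high t ltac:(lra)).
    assert (0 < b * Rpower (sig t) (-b - 1) * dsig t) by (apply Rmult_lt_0_compat; [apply Rmult_lt_0_compat|]; lra).
    assert (0 <= c * E 2 ((-1) * t + 1)) by (apply Rmult_le_pos; lra).
    nra.
Qed.

Lemma gg_high b c t : 1 <= t -> gg b c t = Rpower t (- b).
Proof.
  intros H. unfold gg, g0, phi. rewrite sig_high by lra. rewrite psi_zero by lra. ring.
Qed.

Lemma Ck_lin U k a b0 : isOpen U -> Ck U k (fun t => a * t + b0).
Proof.
  intros HU. apply Ck_plus; auto. apply Ck_scal; auto. apply Ck_id; auto. apply Ck_const; auto.
Qed.

Lemma Ck_psi_lin k a b0 : Ck Rall k (fun t => psi (a * t + b0)).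
Proof.
  apply (Ck_comp Rall Rall k open_Rall open_Rall psi (fun t => a * t + b0)).
  intros; exact I. apply Ck_E. apply Ck_lin, open_Rall.
Qed.

Lemma Ck_chi k : Ck Rall k chi.
Proof.
  unfold chi. apply (Ck_ext Rall k open_Rall (fun t => pa t * / den t)). reflexivity.
  apply Ck_mult. apply open_Rall. apply Ck_psi_lin.
  apply Ck_inv_comp. apply open_Rall. intros x _; pose proof (den_pos x); lra.
  unfold den. apply Ck_plus. apply open_Rall. apply Ck_psi_lin. apply Ck_psi_lin.
Qed.

Lemma Ck_sig k : Ck Rall k sig.
Proof.
  unfold sig. apply Ck_plus. apply open_Rall. apply Ck_const, open_Rall.
  apply Ck_mult. apply open_Rall. apply Ck_chi. apply (Ck_ext Rall k open_Rall (fun t => 1 * t + - (3/5))).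
  intros; ring. apply Ck_lin, open_Rall.
Qed.

Lemma Ck_gg k b c : Ck Rall k (gg b c).
Proof.
  unfold gg. apply Ck_plus. apply open_Rall.
  - unfold g0. apply (Ck_comp Rall Rpos k open_Rall open_Rpos (fun x => Rpower x (-b)) sig).
    intros x _; apply sig_pos. apply Ck_Rpower. apply Ck_sig.
  - apply Ck_scal. apply open_Rall. unfold phi. apply Ck_psi_lin.
Qed.

Lemma gg_cont b c t : continuous (gg b c) t.
Proof. apply (Ck_continuous Rall 0 (gg b c)). apply Ck_gg. exact I. Qed.

Lemma gg_decr b c x y : 0 < b -> 0 < c -> 0 <= x -> x < y -> gg b c y < gg b c x.
Proof.
  intros Hb Hc Hx Hxy.
  destruct (MVT_gen (gg b c) x y (dgg b c)) as [z [Hz Heq]].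
  - intros z _. apply gg_derive.
  - intros z _. apply continuity_pt_filterlim. apply gg_cont.
  - rewrite Rmin_left, Rmax_right in Hz by lra.
    pose proof (dgg_neg b c z Hb Hc ltac:(lra)). nra.
Qed.

Lemma g0_bound b t : 0 < b <= 2 -> 0 <= t <= 1 -> g0 b t <= 25 / 9.
Proof.
  intros Hb Ht. unfold g0. pose proof (sig_ge t). pose proof (sig_le1 t ltac:(lra)).
  unfold Rpower. assert (Hl : ln (sig t) <= 0).
  { rewrite <- ln_1. apply ln_le; lra. }
  assert (Hl2 : ln (3/5) <= ln (sig t)) by (apply ln_le; lra).
  assert (H1 : - b * ln (sig t) <= -2 * ln (3/5)) by nra.
  apply Rle_trans with (exp (-2 * ln (3/5))). destruct H1 as [H1|H1]; [left; apply exp_increasing; exact H1|rewrite H1; lra].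
  replace (-2 * ln (3/5)) with (ln (/ (3/5) * / (3/5))).
  rewrite exp_ln. lra. apply Rmult_lt_0_compat; lra.
  rewrite ln_mult, ln_Rinv by lra. ring.
Qed.

Definition Ij (j : nat) (f : R -> R) (t : R) := RInt (fun v => v ^ j * f (t * v ^ 2)) 0 1.

Lemma ex_derive_cont_pt h x : (forall y, ex_derive h y) -> continuity_pt h x.
Proof. intros H. apply continuity_pt_filterlim. apply (ex_derive_continuous h), H. Qed.

Lemma cont_pow_2d j x y : continuity_2d_pt (fun _ v => v ^ j) x y.
Proof.
  apply (continuity_1d_2d_pt_comp (fun v => v ^ j) (fun _ v => v)).
  apply ex_derive_cont_pt. intros; auto_derive; auto. apply continuity_2d_pt_id2.
Qed.

Lemma Ij_derive j f x : Ck Rall 2 f -> is_derive (Ij j f) x (Ij (S (S j)) (Derive f) x).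
Proof.
  intros Hf. destruct Hf as [Hf1 [Hf2 _]].
  assert (Hd : forall u v, is_derive (fun z => v ^ j * f (z * v ^ 2)) u (v ^ j * (v ^ 2 * Derive f (u * v ^ 2)))).
  { intros u v. apply is_derive_scal. eapply is_derive_eq.
    apply (is_derive_comp f (fun z => z * v ^ 2)). apply Derive_correct, Hf1; exact I.
    auto_derive; auto. rsimpl. ring. }
  unfold Ij. eapply is_derive_eq.
  - apply (is_derive_RInt_param (fun u v => v ^ j * f (u * v ^ 2)) 0 1 x).
    + apply filter_forall. intros y t _. eexists; apply Hd.
    + intros t _. apply (continuity_2d_pt_ext (fun u v => v ^ j * (v ^ 2 * Derive f (u * v ^ 2)))).
      * intros u v. symmetry; apply is_derive_unique, Hd.
      * apply continuity_2d_pt_mult. apply cont_pow_2d.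
        apply continuity_2d_pt_mult. apply cont_pow_2d.
        apply (continuity_1d_2d_pt_comp (Derive f) (fun u v => u * v ^ 2)).
        -- apply continuity_pt_filterlim. apply (ex_derive_continuous (Derive f)), Hf2. exact I.
        -- apply continuity_2d_pt_mult. apply continuity_2d_pt_id1. apply cont_pow_2d.
    + apply filter_forall. intros y. apply (ex_RInt_continuous (V:=R_CompleteNormedModule)). intros z _.
      apply (ex_derive_continuous (fun v => v ^ j * f (y * v ^ 2))).
      apply (ex_derive_mult (fun v => v ^ j) (fun v => f (y * v ^ 2))). auto_derive; auto.
      apply (ex_derive_comp f (fun v => y * v ^ 2)). apply Hf1; exact I. auto_derive; auto.
  - apply RInt_ext. intros v _. replace (v ^ S (S j) * Derive f (x * v ^ 2)) with (v ^ j * (v ^ 2 * Derive f (x * v ^ 2))) by (simpl; ring). apply is_derive_unique, Hd.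
Qed.

Lemma Ck_Ij k : forall j f, Ck Rall (k + 2) f -> Ck Rall k (Ij j f).
Proof.
  induction k as [|k IH]; intros j f Hf; simpl; auto. split.
  - intros x _. eexists; apply Ij_derive. apply (Ck_le Rall (S k + 2)); auto. lia.
  - apply (Ck_ext Rall k open_Rall (Ij (S (S j)) (Derive f))).
    + intros x _. symmetry; apply is_derive_unique, Ij_derive. apply (Ck_le Rall (S k + 2)); auto. lia.
    + apply IH. simpl in Hf. apply Hf.
Qed.

Lemma exRI (f : R -> R) a b : (forall x, continuous f x) -> ex_RInt f a b.
Proof. intros H. apply (ex_RInt_continuous (V:=R_CompleteNormedModule)). intros; apply H. Qed.

Lemma RInt_antideriv (f F : R -> R) a b :
  (forall x, Rmin a b <= x <= Rmax a b -> is_derive F x (f x)) -> (forall x, continuous f x) ->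
  RInt f a b = F b - F a.
Proof.
  intros H1 H2. apply (is_RInt_unique (V:=R_CompleteNormedModule)).
  apply (is_RInt_derive (V:=R_CompleteNormedModule) F f). auto. intros; apply H2.
Qed.

Lemma Ck_pow U k j : isOpen U -> Ck U k (fun v => v ^ j).
Proof.
  intros HU. induction j as [|j IH]; simpl.
  - apply Ck_const; auto.
  - apply Ck_mult; auto. apply Ck_id; auto.
Qed.

Lemma Ck_integrand k j t f : Ck Rall k f -> Ck Rall k (fun v => v ^ j * f (t * v ^ 2)).
Proof.
  intros Hf. apply Ck_mult. apply open_Rall. apply Ck_pow, open_Rall.
  apply (Ck_comp Rall Rall k open_Rall open_Rall f (fun v => t * v ^ 2)). intros; exact I. auto.
  apply Ck_scal. apply open_Rall. apply Ck_pow, open_Rall.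
Qed.

Lemma Ck1_cont f : Ck Rall 1 f -> forall x, continuous f x.
Proof. intros H x. apply (Ck_continuous Rall 0 f H x I). Qed.

Lemma Ck_g0 k b : Ck Rall k (g0 b).
Proof.
  unfold g0. apply (Ck_comp Rall Rpos k open_Rall open_Rpos (fun x => Rpower x (-b)) sig).
  intros x _; apply sig_pos. apply Ck_Rpower. apply Ck_sig.
Qed.

Lemma Ck_phi k : Ck Rall k phi.
Proof. unfold phi. apply Ck_psi_lin. Qed.

Lemma RInt_sq : RInt (fun v => v ^ 2) 0 1 = 1 / 3.
Proof.
  rewrite (RInt_antideriv _ (fun v => v ^ 3 / 3)).
  - simpl; field.
  - intros x _. auto_derive; auto. field.
  - intros x. apply Ck1_cont. apply Ck_pow, open_Rall.
Qed.

Lemma RInt_sq_half : RInt (fun v => v ^ 2) 0 (1/2) = 1 / 24.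
Proof.
  rewrite (RInt_antideriv _ (fun v => v ^ 3 / 3)).
  - simpl; field.
  - intros x _. auto_derive; auto. field.
  - intros x. apply Ck1_cont. apply Ck_pow, open_Rall.
Qed.

Definition bb n := n / (n - 1).
Definition A0 n := Ij 2 (g0 (bb n)) 1.
Definition B0 := Ij 2 phi 1.
Definition M0 n := (n - 1) / (n - 3).
Definition cc n := (M0 n - A0 n) / B0.
Definition G n := gg (bb n) (cc n).

Lemma bb_range n : 3 < n -> 1 < bb n < 3/2.
Proof.
  intros Hn. unfold bb. split.
  - apply (Rmult_lt_reg_r (n - 1)); [lra|]. unfold Rdiv; rewrite Rmult_assoc, Rinv_l by lra. lra.
  - apply (Rmult_lt_reg_r (n - 1)); [lra|]. unfold Rdiv; rewrite Rmult_assoc, Rinv_l by lra. lra.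
Qed.

Lemma A0_bound n : 3 < n -> A0 n <= 25 / 27.
Proof.
  intros Hn. pose proof (bb_range n Hn). unfold A0, Ij.
  apply Rle_trans with (RInt (fun v => 25/9 * v ^ 2) 0 1).
  - apply RInt_le. lra. apply exRI. apply Ck1_cont. apply Ck_integrand, Ck_g0.
    apply exRI. apply Ck1_cont. apply Ck_scal. apply open_Rall. apply Ck_pow, open_Rall.
    intros x Hx. rewrite Rmult_comm. apply Rmult_le_compat_r. apply pow_le; lra.
    apply g0_bound. lra. split. rewrite Rmult_1_l. apply pow_le; lra.
    rewrite Rmult_1_l. simpl. nra.
  - rewrite (RInt_scal (V:=R_CompleteNormedModule) (fun v => v ^ 2)).
    + rewrite RInt_sq. unfold scal; simpl; unfold mult; simpl. lra.
    + apply exRI. apply Ck1_cont. apply Ck_pow, open_Rall.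
Qed.

Lemma psi_mono x y : 0 < x <= y -> psi x <= psi y.
Proof.
  intros H. unfold psi, E. destruct (Rle_dec x 0); [lra|]. destruct (Rle_dec y 0); [lra|].
  simpl. rewrite !Rinv_1, !Rmult_1_r.
  destruct (Req_dec x y). subst; lra. left. apply exp_increasing.
  assert (/ y < / x) by (apply Rinv_lt_contravar; nra). lra.
Qed.

Lemma B0_pos : 0 < B0.
Proof.
  unfold B0, Ij.
  assert (Hc : forall a b, ex_RInt (fun v => v ^ 2 * phi (1 * v ^ 2)) a b).
  { intros a b. apply exRI. apply Ck1_cont. apply Ck_integrand, Ck_phi. }
  assert (HE : RInt (fun v => v ^ 2 * phi (1 * v ^ 2)) 0 1 = RInt (fun v => v ^ 2 * phi (1 * v ^ 2)) 0 (1/2) + RInt (fun v => v ^ 2 * phi (1 * v ^ 2)) (1/2) 1).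
  { symmetry. apply (RInt_Chasles (V:=R_CompleteNormedModule)); auto. }
  rewrite HE.
  assert (H1 : 0 <= RInt (fun v => v ^ 2 * phi (1 * v ^ 2)) (1/2) 1).
  { apply RInt_ge_0. lra. auto. intros x Hx. apply Rmult_le_pos. apply pow_le; lra. apply phi_nonneg. }
  assert (H2 : psi (3/4) / 24 <= RInt (fun v => v ^ 2 * phi (1 * v ^ 2)) 0 (1/2)).
  { apply Rle_trans with (RInt (fun v => psi (3/4) * v ^ 2) 0 (1/2)).
    - rewrite (RInt_scal (V:=R_CompleteNormedModule) (fun v => v ^ 2)).
      + rewrite RInt_sq_half. unfold scal; simpl; unfold mult; simpl. lra.
      + apply exRI. apply Ck1_cont. apply Ck_pow, open_Rall.
    - apply RInt_le. lra. apply exRI. apply Ck1_cont. apply Ck_scal. apply open_Rall. apply Ck_pow, open_Rall.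
      auto. intros x Hx. rewrite Rmult_comm. apply Rmult_le_compat_l. apply pow_le; lra.
      unfold phi. apply psi_mono. simpl. nra. }
  pose proof (psi_pos (3/4) ltac:(lra)). lra.
Qed.

Lemma M0_gt1 n : 3 < n -> 1 < M0 n.
Proof.
  intros Hn. unfold M0. apply (Rmult_lt_reg_r (n - 3)); [lra|].
  unfold Rdiv; rewrite Rmult_assoc, Rinv_l by lra. lra.
Qed.

Lemma cc_pos n : 3 < n -> 0 < cc n.
Proof.
  intros Hn. unfold cc. pose proof (A0_bound n Hn). pose proof (M0_gt1 n Hn). pose proof B0_pos.
  apply Rdiv_lt_0_compat; lra.
Qed.

Lemma I2G1 n : 3 < n -> Ij 2 (G n) 1 = M0 n.
Proof.
  intros Hn. pose proof B0_pos. unfold G, gg, Ij.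
  rewrite (RInt_ext _ (fun v => plus (v ^ 2 * g0 (bb n) (1 * v ^ 2)) (scal (cc n) (v ^ 2 * phi (1 * v ^ 2))))).
  2: { intros x _. rsimpl. ring. }
  rewrite (RInt_plus (V:=R_CompleteNormedModule)).
  rewrite (RInt_scal (V:=R_CompleteNormedModule)).
  - fold (Ij 2 (g0 (bb n)) 1). fold (A0 n). fold (Ij 2 phi 1). fold B0. rsimpl. unfold cc. field. lra.
  - apply exRI. apply Ck1_cont. apply Ck_integrand, Ck_phi.
  - apply exRI. apply Ck1_cont. apply Ck_integrand, Ck_g0.
  - apply (ex_RInt_scal (V:=R_CompleteNormedModule)). apply exRI. apply Ck1_cont. apply Ck_integrand, Ck_phi.
Qed.

Lemma Ck_G n k : Ck Rall k (G n).
Proof. apply Ck_gg. Qed.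

Definition rhoF n (r : R) := G n (r ^ 2).
Definition mu n t := 4 * PI * Ij 2 (G n) t.

Lemma Ck_mu n k : Ck Rall k (mu n).
Proof.
  unfold mu. apply Ck_scal. apply open_Rall. apply (Ck_Ij k 2 (G n)). apply Ck_G.
Qed.

Lemma mass_eq n r : mass (rhoF n) r = r ^ 3 * mu n (r ^ 2).
Proof.
  unfold mass, mu, rhoF, Ij.
  set (f := fun s => s ^ 2 * G n (s ^ 2)).
  assert (Hf : forall x, continuous f x).
  { intros x. apply Ck1_cont. unfold f. apply (Ck_ext Rall 1 open_Rall (fun v => v ^ 2 * G n (1 * v ^ 2))).
    intros; rewrite Rmult_1_l; auto. apply Ck_integrand, Ck_G. }
  assert (H := RInt_comp_lin (V:=R_CompleteNormedModule) f r 0 0 1 (exRI f _ _ Hf)).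
  replace (r * 0 + 0) with 0 in H by ring. replace (r * 1 + 0) with r in H by ring.
  rewrite <- H.
  rewrite (RInt_ext _ (fun y => scal (r ^ 3) (y ^ 2 * G n (r ^ 2 * y ^ 2)))).
  2: { intros x _. unfold f. rsimpl. replace ((r * x + 0) * ((r * x + 0) * 1)) with (r * (r * 1) * (x * (x * 1))) by ring. ring. }
  rewrite (RInt_scal (V:=R_CompleteNormedModule)). rsimpl. ring.
  apply exRI. apply Ck1_cont. apply Ck_integrand, Ck_G.
Qed.

Lemma G_pos n t : 3 < n -> 0 < G n t.
Proof. intros Hn. apply gg_pos. left; apply cc_pos; auto. Qed.

Lemma G_decr n x y : 3 < n -> 0 <= x -> x < y -> G n y < G n x.
Proof.
  intros Hn. pose proof (bb_range n Hn). apply gg_decr. lra. apply cc_pos; auto.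
Qed.

Lemma mu_nonneg n t : 3 < n -> 0 <= mu n t.
Proof.
  intros Hn. unfold mu. apply Rmult_le_pos. pose proof PI_RGT_0; lra.
  unfold Ij. apply RInt_ge_0. lra. apply exRI. apply Ck1_cont. apply Ck_integrand, Ck_G.
  intros x Hx. apply Rmult_le_pos. apply pow_le; lra. left; apply G_pos; auto.
Qed.

Lemma mu_lower n t : 3 < n -> 0 <= t -> 4 * PI * G n t / 3 <= mu n t.
Proof.
  intros Hn Ht. unfold mu. pose proof PI_RGT_0.
  replace (4 * PI * G n t / 3) with (4 * PI * (G n t * RInt (fun v => v ^ 2) 0 1)) by (rewrite RInt_sq; field).
  apply Rmult_le_compat_l. lra.
  rewrite <- (RInt_scal (V:=R_CompleteNormedModule)).
  2: { apply exRI. apply Ck1_cont. apply Ck_pow, open_Rall. }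
  unfold Ij. apply RInt_le. lra.
  apply (ex_RInt_scal (V:=R_CompleteNormedModule)). apply exRI. apply Ck1_cont. apply Ck_pow, open_Rall.
  apply exRI. apply Ck1_cont. apply Ck_integrand, Ck_G.
  intros x Hx. rsimpl. change (x * (x * 1)) with (x ^ 2). rewrite Rmult_comm. apply Rmult_le_compat_l. apply pow_le; lra.
  assert (t * x ^ 2 <= t). { assert (x ^ 2 <= 1) by (simpl; nra). assert (0 <= x ^ 2) by (apply pow_le; lra). nra. }
  destruct (Req_dec (t * x ^ 2) t) as [E|E]. rewrite E; lra.
  left. apply G_decr; auto. apply Rmult_le_pos. lra. apply pow_le; lra. lra.
Qed.

Lemma mu_pos n t : 3 < n -> 0 <= t -> 0 < mu n t.
Proof.
  intros Hn Ht. pose proof (mu_lower n t Hn Ht). pose proof (G_pos n t Hn). pose proof PI_RGT_0.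
  assert (0 < 4 * PI * G n t / 3). { apply Rdiv_lt_0_compat; [|lra]. apply Rmult_lt_0_compat; lra. }
  lra.
Qed.

Definition CC n := 4 * PI * (n - 1) ^ 2 / (2 * (n + 1) * (n - 3)).
Definition hh n t := CC n + RInt (fun u => G n u * mu n u / 2) t 1.

Lemma Ck_Gmu n k : Ck Rall k (fun u => G n u * mu n u / 2).
Proof.
  apply (Ck_ext Rall k open_Rall (fun u => / 2 * (G n u * mu n u))). intros; unfold Rdiv; ring.
  apply Ck_scal. apply open_Rall. apply Ck_mult. apply open_Rall. apply Ck_G. apply Ck_mu.
Qed.

Lemma hh_derive n t : is_derive (hh n) t (- (G n t * mu n t / 2)).
Proof.
  unfold hh. eapply is_derive_eq.
  - apply (is_derive_plus (fun _ => CC n) (fun t => RInt (fun u => G n u * mu n u / 2) t 1)).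
    apply is_derive_const.
    apply (is_derive_RInt' (V:=R_NormedModule) (fun u => G n u * mu n u / 2) _ t 1).
    + apply filter_forall. intros a. apply (RInt_correct (V:=R_CompleteNormedModule)).
      apply exRI. apply Ck1_cont. apply Ck_Gmu.
    + apply Ck1_cont. apply Ck_Gmu.
  - rsimpl. ring.
Qed.

Lemma Ck_hh n k : Ck Rall k (hh n).
Proof.
  destruct k as [|k]; simpl; auto. split.
  - intros x _. eexists; apply hh_derive.
  - apply (Ck_ext Rall k open_Rall (fun t => - (G n t * mu n t / 2))).
    + intros x _. symmetry; apply is_derive_unique, hh_derive.
    + apply Ck_opp. apply open_Rall. apply Ck_Gmu.
Qed.

Lemma hh_low n t : 3 < n -> t <= 1 -> CC n <= hh n t.
Proof.
  intros Hn Ht. unfold hh. assert (0 <= RInt (fun u => G n u * mu n u / 2) t 1); [|lra].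
  apply RInt_ge_0. lra. apply exRI. apply Ck1_cont. apply Ck_Gmu.
  intros x _. pose proof (G_pos n x Hn). pose proof (mu_nonneg n x Hn).
  apply Rmult_le_pos; [apply Rmult_le_pos|]; lra.
Qed.

Lemma Rpower_nat x m : 0 < x -> Rpower x (INR m) = x ^ m.
Proof. apply Rpower_pow. Qed.

Lemma Rpow2 x : 0 < x -> x ^ 2 = Rpower x 2.
Proof. intros H. rewrite <- (Rpower_pow 2 x H). simpl. f_equal; ring. Qed.

Lemma Rpow3 x : 0 < x -> x ^ 3 = Rpower x 3.
Proof. intros H. rewrite <- (Rpower_pow 3 x H). simpl. f_equal; ring. Qed.

Lemma Rpower_div x y z : Rpower x y / Rpower x z = Rpower x (y - z).
Proof. unfold Rdiv. rewrite <- Rpower_Ropp, <- Rpower_plus. f_equal; ring. Qed.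

Lemma Rpower_deriv y x : 0 < x -> is_derive (fun x => Rpower x y) x (y * Rpower x (y - 1)).
Proof. intros H. apply is_derive_Reals, derivable_pt_lim_power, H. Qed.

Lemma is_derive_Rpower_div y c x : 0 < x -> is_derive (fun s => Rpower s y / c) x (y * Rpower x (y - 1) / c).
Proof.
  intros H. apply (is_derive_ext (fun s => / c * Rpower s y)). intros t; unfold Rdiv; apply Rmult_comm.
  eapply is_derive_eq. apply is_derive_scal, Rpower_deriv, H. unfold Rdiv; apply Rmult_comm.
Qed.

Lemma Rpower_base1 y : Rpower 1 y = 1.
Proof. unfold Rpower. rewrite ln_1, Rmult_0_r. apply exp_0. Qed.

Definition ee n := 3 - 2 * bb n.

Lemma ee_eq n : 3 < n -> ee n = (n - 3) / (n - 1).
Proof. intros Hn. unfold ee, bb. field. lra. Qed.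

Lemma ee_pos n : 3 < n -> 0 < ee n.
Proof. intros Hn. rewrite ee_eq by auto. apply Rdiv_lt_0_compat; lra. Qed.

Lemma M0_ee n : 3 < n -> M0 n = / ee n.
Proof. intros Hn. rewrite ee_eq by auto. unfold M0. field. lra. Qed.

Lemma integrand_high n s : 1 <= s -> s ^ 2 * G n (s ^ 2) = Rpower s (2 - 2 * bb n).
Proof.
  intros Hs. unfold G. rewrite gg_high.
  2: { replace 1 with (1 ^ 2) by ring. apply pow_incr; lra. }
  rewrite (Rpow2 s) by lra. rewrite Rpower_mult, <- Rpower_plus. f_equal; ring.
Qed.

Lemma cont_f n : forall x, continuous (fun s => s ^ 2 * G n (s ^ 2)) x.
Proof.
  intros x. apply Ck1_cont. apply (Ck_ext Rall 1 open_Rall (fun v => v ^ 2 * G n (1 * v ^ 2))).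
  intros; rewrite Rmult_1_l; auto. apply Ck_integrand, Ck_G.
Qed.

Lemma RInt_mass n r : 3 < n -> 1 <= r -> RInt (fun s => s ^ 2 * G n (s ^ 2)) 0 r = M0 n * Rpower r (ee n).
Proof.
  intros Hn Hr. pose proof (ee_pos n Hn) as He.
  pose proof (cont_f n) as Hf.
  rewrite <- (RInt_Chasles (V:=R_CompleteNormedModule) _ 0 1 r) by (apply exRI; auto).
  assert (H1 : RInt (fun s => s ^ 2 * G n (s ^ 2)) 0 1 = M0 n).
  { rewrite <- (I2G1 n Hn). unfold Ij. apply RInt_ext. intros; rewrite Rmult_1_l; auto. }
  rewrite H1.
  rewrite (RInt_antideriv _ (fun s => Rpower s (ee n) / ee n) 1 r).
  - rewrite Rpower_base1. rsimpl. rewrite M0_ee by auto. field. lra.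
  - intros x Hx. rewrite Rmin_left, Rmax_right in Hx by lra.
    rewrite integrand_high by lra.
    eapply is_derive_eq. apply is_derive_Rpower_div; lra.
    rsimpl. replace (ee n - 1) with (2 - 2 * bb n) by (unfold ee; ring). field. lra.
  - auto.
Qed.

Lemma mass_high n r : 3 < n -> 1 <= r -> mass (rhoF n) r = 4 * PI * M0 n * Rpower r (ee n).
Proof. intros Hn Hr. unfold mass, rhoF. rewrite RInt_mass by auto. ring. Qed.

Lemma mu_high n t : 3 < n -> 1 <= t -> mu n t = 4 * PI * M0 n * Rpower t (- bb n).
Proof.
  intros Hn Ht. set (r := sqrt t).
  assert (Hr1 : 1 <= r) by (unfold r; rewrite <- sqrt_1; apply sqrt_le_1_alt; lra).
  assert (Hrt : r ^ 2 = t) by (unfold r; apply pow2_sqrt; lra).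
  pose proof (mass_eq n r) as H1. rewrite mass_high in H1 by auto. rewrite Hrt in H1.
  assert (Hr3 : 0 < r ^ 3) by (apply pow_lt; lra).
  assert (mu n t = 4 * PI * M0 n * (Rpower r (ee n) / r ^ 3)) by (apply (Rmult_eq_reg_l (r ^ 3)); [rewrite <- H1; field; lra | lra]).
  rewrite H. f_equal. rewrite Rpow3 by lra. rewrite Rpower_div.
  unfold r. rewrite <- Rpower_sqrt by lra. rewrite Rpower_mult. f_equal. unfold ee. field.
Qed.

Lemma CC_eq n : 3 < n -> CC n = 4 * PI * M0 n / (2 * (2 * bb n - 1)).
Proof. intros Hn. unfold CC, M0, bb. field. repeat split; lra. Qed.

Lemma hh_high n t : 3 < n -> 1 <= t -> hh n t = CC n * Rpower t (1 - 2 * bb n).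
Proof.
  intros Hn Ht. pose proof (bb_range n Hn). unfold hh.
  set (K := 4 * PI * M0 n).
  assert (Hc : forall x, continuous (fun u => G n u * mu n u / 2) x).
  { intros; apply Ck1_cont, Ck_Gmu. }
  rewrite <- (opp_RInt_swap (V:=R_CompleteNormedModule)) by (apply exRI; auto).
  rewrite (RInt_antideriv _ (fun u => K / 2 * (Rpower u (1 - 2 * bb n) / (1 - 2 * bb n))) 1 t).
  - rewrite Rpower_base1. rewrite CC_eq by auto. fold K. rsimpl. field. lra.
  - intros x Hx. rewrite Rmin_left, Rmax_right in Hx by lra.
    assert (HG : G n x * mu n x / 2 = K / 2 * Rpower x (- (2 * bb n))).
    { unfold G. rewrite gg_high by lra. fold (G n). rewrite mu_high by lra. fold K.
      replace (- (2 * bb n)) with (- bb n + - bb n) by ring. rewrite Rpower_plus. field. }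
    rewrite HG. apply is_derive_scal. eapply is_derive_eq. apply is_derive_Rpower_div; lra.
    rsimpl. replace (1 - 2 * bb n - 1) with (- (2 * bb n)) by ring. field. lra.
  - auto.
Qed.

Lemma G_cont n x : continuous (G n) x.
Proof. apply Ck1_cont, Ck_G. Qed.

Lemma G_1 n : G n 1 = 1.
Proof. unfold G. rewrite gg_high by lra. apply Rpower_base1. Qed.

Lemma G_le n x y : 3 < n -> 0 <= x -> x <= y -> G n y <= G n x.
Proof.
  intros Hn Hx Hxy. destruct (Req_dec x y). subst; lra. left; apply G_decr; auto; lra.
Qed.

Lemma G_inj n x y : 3 < n -> 0 <= x -> 0 <= y -> G n x = G n y -> x = y.
Proof.
  intros Hn Hx Hy H. destruct (Rtotal_order x y) as [H1|[H1|H1]]; auto.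
  - pose proof (G_decr n x y Hn Hx H1). lra.
  - pose proof (G_decr n y x Hn Hy H1). lra.
Qed.

Lemma G_exists n y : 3 < n -> 0 < y < G n 0 -> exists T, 0 < T /\ G n T = y.
Proof.
  intros Hn Hy. pose proof (bb_range n Hn).
  destruct (Rlt_dec y 1).
  - exists (Rpower y (- / bb n)).
    assert (HT : 1 < Rpower y (- / bb n)).
    { unfold Rpower. rewrite <- exp_0. apply exp_increasing.
      assert (ln y < 0) by (rewrite <- ln_1; apply ln_increasing; lra).
      assert (0 < / bb n) by (apply Rinv_0_lt_compat; lra). nra. }
    split. lra. unfold G. rewrite gg_high by lra. rewrite Rpower_mult.
    replace (- / bb n * - bb n) with 1 by (field; lra). apply Rpower_1; lra.
  - destruct (IVT_cor (fun t => G n t - y) 0 1) as [z [Hz Hgz]].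
    + intros x. apply continuity_pt_minus. apply continuity_pt_filterlim, G_cont. apply continuity_pt_const. intros a b; auto.
    + lra.
    + rewrite G_1. assert (0 < G n 0 - y) by lra. assert (1 - y <= 0) by lra. nra.
    + exists z. split; [|lra]. destruct (Req_dec z 0); [subst; lra|lra].
Qed.

Definition ginv n y := epsilon (inhabits 0) (fun T => 0 < T /\ G n T = y).

Lemma ginv_spec n y : 3 < n -> 0 < y < G n 0 -> 0 < ginv n y /\ G n (ginv n y) = y.
Proof.
  intros Hn Hy. unfold ginv. apply epsilon_spec. apply G_exists; auto.
Qed.

Lemma G_range n T : 3 < n -> 0 < T -> 0 < G n T < G n 0.
Proof. intros Hn HT. split. apply G_pos; auto. apply G_decr; auto; lra. Qed.

Lemma ginv_G n T : 3 < n -> 0 < T -> ginv n (G n T) = T.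
Proof.
  intros Hn HT. destruct (ginv_spec n (G n T) Hn (G_range n T Hn HT)) as [H1 H2].
  apply G_inj in H2; auto; lra.
Qed.

Lemma ginv_bounds n y a1 a2 : 3 < n -> 0 < a1 -> a1 <= a2 -> G n a2 <= y <= G n a1 -> a1 <= ginv n y <= a2.
Proof.
  intros Hn Ha1 Ha12 Hy.
  assert (Hr : 0 < y < G n 0).
  { 
    pose proof (G_pos n a2 Hn). pose proof (G_decr n 0 a1 Hn ltac:(lra) Ha1). lra. }
  destruct (ginv_spec n y Hn Hr) as [H1 H2]. split.
  - destruct (Rle_dec a1 (ginv n y)); auto. pose proof (G_decr n (ginv n y) a1 Hn ltac:(lra) ltac:(lra)). lra.
  - destruct (Rle_dec (ginv n y) a2); auto. pose proof (G_decr n a2 (ginv n y) Hn ltac:(lra) ltac:(lra)). lra.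
Qed.

Definition dG n := dgg (bb n) (cc n).

Lemma G_derive n t : is_derive (G n) t (dG n t).
Proof. apply gg_derive. Qed.

Lemma dG_neg n t : 3 < n -> 0 <= t -> dG n t < 0.
Proof. intros Hn Ht. pose proof (bb_range n Hn). apply dgg_neg; auto. lra. apply cc_pos; auto. Qed.

Lemma negG_derive n t : is_derive (fun s => - G n s) t (- dG n t).
Proof. eapply is_derive_eq. apply (is_derive_opp (G n)), G_derive. rsimpl. ring. Qed.

Lemma ginv_derive n y : 3 < n -> 0 < y < G n 0 -> is_derive (ginv n) y (/ dG n (ginv n y)).
Proof.
  intros Hn Hy. destruct (ginv_spec n y Hn Hy) as [HT HGT].
  set (T := ginv n y) in *.
  set (f := fun s => - G n s). set (gi := fun z => ginv n (- z)).
  assert (Hfd : forall a, derivable_pt f a).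
  { intros a. apply ex_derive_Reals_0. unfold f. eexists. apply negG_derive. }
  assert (Hfinc : forall x y, T / 2 <= x -> x < y -> y <= 2 * T -> f x < f y).
  { intros a b Ha Hab Hb. unfold f. pose proof (G_decr n a b Hn ltac:(lra) Hab). lra. }
  assert (Hfg : forall z, f (T/2) <= z -> z <= f (2 * T) -> comp f gi z = id z).
  { intros z H1 H2. unfold comp, id, f, gi in *.
    assert (Hr : 0 < - z < G n 0).
    { pose proof (G_pos n (2 * T) Hn). pose proof (G_decr n 0 (T/2) Hn ltac:(lra) ltac:(lra)). lra. }
    destruct (ginv_spec n (- z) Hn Hr) as [_ E]. rewrite E. ring. }
  assert (Hgw : forall z, f (T/2) <= z -> z <= f (2 * T) -> T/2 <= gi z <= 2 * T).
  { intros z H1 H2. unfold f, gi in *. apply ginv_bounds; auto; lra. }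
  assert (Hy1 : f (T/2) < - y < f (2 * T)).
  { unfold f. rewrite <- HGT. split.
    - pose proof (G_decr n (T/2) T Hn ltac:(lra) ltac:(lra)). lra.
    - pose proof (G_decr n T (2*T) Hn ltac:(lra) ltac:(lra)). lra. }
  assert (Hcont : continuity_pt gi (- y)).
  { apply (continuity_pt_recip_interv f gi (T/2) (2*T)); auto. lra.
    intros a _. apply derivable_continuous_pt, Hfd. }
  assert (Hgil : gi (f (T/2)) = T/2).
  { unfold gi, f. rewrite Ropp_involutive. apply ginv_G; auto; lra. }
  assert (Hgiu : gi (f (2 * T)) = 2 * T).
  { unfold gi, f. rewrite Ropp_involutive. apply ginv_G; auto; lra. }
  assert (Hgix : gi (- y) = T) by (unfold gi; rewrite Ropp_involutive; reflexivity).
  assert (Hincr : gi (f (T/2)) <= gi (- y) <= gi (f (2 * T))) by (rewrite Hgil, Hgiu, Hgix; lra).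
  assert (Hfg2 : forall z, f (T/2) <= z <= f (2 * T) -> comp f gi z = id z).
  { intros z [H1 H2]; apply Hfg; auto. }
  assert (HDf : Derive f T = - dG n T) by (apply is_derive_unique; apply negG_derive).
  assert (Hne : derive_pt f (gi (- y)) ((fun a _ => Hfd a) (gi (- y)) Hincr) <> 0).
  { rewrite Derive_Reals. rewrite Hgix. rewrite HDf.
    pose proof (dG_neg n T Hn ltac:(lra)). lra. }
  pose proof (derivable_pt_lim_recip_interv f gi (f (T/2)) (f (2*T)) (- y) (fun a _ => Hfd a) Hcont
    ltac:(lra) Hy1 Hincr Hfg2 Hne) as HD.
  rewrite Derive_Reals in HD. rewrite Hgix in HD.
  rewrite HDf in HD.
  apply is_derive_Reals in HD.
  apply (is_derive_ext (fun y => gi (- y))). intros t; unfold gi; rewrite Ropp_involutive; reflexivity.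
  eapply is_derive_eq. apply (is_derive_comp gi (fun y => - y) y (1 / - dG n T) (-1)). exact HD.
  auto_derive; auto; ring.
  pose proof (dG_neg n T Hn ltac:(lra)). rsimpl. field. lra.
Qed.

Lemma Ck_dG n k : Ck Rpos k (dG n).
Proof.
  apply (Ck_sub Rall). intros; exact I.
  apply (Ck_ext Rall k open_Rall (Derive (G n))).
  - intros x _. apply is_derive_unique, G_derive.
  - exact (proj2 (Ck_G n (S k) : Ck Rall (S k) (G n))).
Qed.

Lemma Ck_ginv_comp n : 3 < n -> forall k phi, Ck Rpos k phi ->
  Ck (fun x => 0 < x < G n 0) k (fun x => phi (ginv n x)).
Proof.
  intros Hn k. induction k as [|k IH]; intros phi Hphi; simpl; auto.
  destruct Hphi as [Hp1 Hp2].
  split.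
  - intros x Hx. destruct (ginv_spec n x Hn Hx) as [HT _].
    apply (ex_derive_comp phi (ginv n)). apply Hp1, HT. eexists; apply ginv_derive; auto.
  - apply (Ck_ext _ k (open_interval 0 (G n 0)) (fun x => (fun t => Derive phi t * / dG n t) (ginv n x))).
    + intros x Hx. destruct (ginv_spec n x Hn Hx) as [HT _].
      rewrite (Derive_comp phi (ginv n)). rewrite (is_derive_unique _ _ _ (ginv_derive n x Hn Hx)). ring.
      apply Hp1, HT. eexists; apply ginv_derive; auto.
    + apply (IH (fun t => Derive phi t * / dG n t)). apply Ck_mult. apply open_Rpos. auto.
      apply Ck_inv_comp. apply open_Rpos. intros t Ht. pose proof (dG_neg n t Hn ltac:(unfold Rpos in Ht; lra)). lra.
      apply Ck_dG.
Qed.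

Lemma Rpower_lim_pos a : 0 < a -> is_lim (fun r => Rpower r a) p_infty p_infty.
Proof.
  intros Ha. unfold Rpower.
  apply (is_lim_comp exp (fun r => a * ln r) p_infty p_infty p_infty).
  - apply is_lim_exp_p.
  - assert (H := is_lim_scal_l ln a p_infty p_infty is_lim_ln_p).
    replace (Rbar_mult a p_infty) with p_infty in H. exact H.
    simpl. destruct (Rle_dec 0 a); [|lra]. destruct (Rle_lt_or_eq_dec 0 a r); [reflexivity|lra].
  - apply filter_forall. intros y H. discriminate H.
Qed.

Lemma Rpower_lim_neg a : a < 0 -> is_lim (fun r => Rpower r a) p_infty 0.
Proof.
  intros Ha. unfold Rpower.
  apply (is_lim_comp exp (fun r => a * ln r) p_infty 0 m_infty).
  - apply is_lim_exp_m.
  - assert (H := is_lim_scal_l ln a p_infty p_infty is_lim_ln_p).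
    replace (Rbar_mult a p_infty) with m_infty in H. exact H.
    simpl. destruct (Rle_dec 0 a) as [Hle|Hnle]; [exfalso; lra|reflexivity].
  - apply filter_forall. intros y H. discriminate H.
Qed.

Lemma CC_pos n : 3 < n -> 0 < CC n.
Proof.
  intros Hn. unfold CC. pose proof PI_RGT_0. apply Rdiv_lt_0_compat.
  apply Rmult_lt_0_compat. lra. apply pow_lt; lra. apply Rmult_lt_0_compat; lra.
Qed.

Lemma hh_pos n t : 3 < n -> 0 < hh n t.
Proof.
  intros Hn. pose proof (CC_pos n Hn). destruct (Rle_dec t 1).
  - pose proof (hh_low n t Hn r). lra.
  - rewrite hh_high by lra. apply Rmult_lt_0_compat; auto. apply Rpower_pos.
Qed.

Lemma rho_derive n r : is_derive (rhoF n) r (2 * r * dG n (r ^ 2)).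
Proof.
  unfold rhoF. eapply is_derive_eq. apply (is_derive_comp (G n) (fun r => r ^ 2)). apply G_derive.
  auto_derive; auto. rsimpl. ring.
Qed.

Lemma dG_ex n x : ex_derive (dG n) x.
Proof.
  apply (ex_derive_ext (Derive (G n))). intros t; apply is_derive_unique, G_derive.
  exact (proj1 (proj2 (Ck_G n 2 : Ck Rall 2 (G n))) x I).
Qed.

Lemma p_derive n r : is_derive (fun r => hh n (r ^ 2)) r (- (r * G n (r ^ 2) * mu n (r ^ 2))).
Proof.
  eapply is_derive_eq. apply (is_derive_comp (hh n) (fun r => r ^ 2)). apply hh_derive.
  auto_derive; auto. rsimpl. field.
Qed.

Theorem mainTheorem6 (n : R) (hn : 3 < n) :
  exists (rho p : R -> R),
    (forall r, 0 <= r -> 0 < rho r) /\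
    (forall r, 0 <= r -> 0 < p r) /\
    (exists g : R -> R, smooth g /\ forall r, rho r = g (r ^ 2)) /\
    (exists h : R -> R, smooth h /\ forall r, p r = h (r ^ 2)) /\
    (forall r, 0 < r -> Derive rho r < 0) /\
    Derive_n rho 2 0 < 0 /\
    (forall r, 1 < r -> rho r = Rpower r (- (2 * n / (n - 1)))) /\
    (forall r, 0 <= r ->
       is_RInt_gen (fun s => / s ^ 2 * mass rho s * rho s)
         (at_point r) (Rbar_locally p_infty) (p r)) /\
    (forall r, 0 < r -> is_derive p r (- (rho r * mass rho r / r ^ 2))) /\
    (exists F : R -> R,
       smooth_on_open F 0 (rho 0) /\
       (forall x, 0 < x < rho 0 -> Derive F x > 0) /\
       (forall r, 0 < r -> p r = F (rho r)) /\
       (forall x, 0 < x < rho 1 ->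
          F x = 4 * PI * (n - 1) ^ 2 / (2 * (n + 1) * (n - 3))
                * Rpower x ((n + 1) / n))) /\
    (forall r, 1 < r ->
       mass rho r = 4 * PI * ((n - 1) / (n - 3)) * Rpower r ((n - 3) / (n - 1))) /\
    is_lim (mass rho) p_infty p_infty.
Proof.
  pose proof (bb_range n hn) as Hb.
  assert (Hrho0 : rhoF n 0 = G n 0) by (unfold rhoF; f_equal; ring).
  assert (Hrho1 : rhoF n 1 = 1) by (unfold rhoF; rewrite pow1; apply G_1).
  exists (rhoF n), (fun r => hh n (r ^ 2)).
  split; [|split; [|split; [|split; [|split; [|split; [|split; [|split; [|split; [|split; [|split]]]]]]]]]].
  - intros r _. apply G_pos; auto.
  - intros r _. apply hh_pos; auto.
  - exists (G n). split. apply Ck_smooth. intros k; apply Ck_G. intros r; reflexivity.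
  - exists (hh n). split. apply Ck_smooth. intros k; apply Ck_hh. intros r; reflexivity.
  - intros r Hr. rewrite (is_derive_unique _ _ _ (rho_derive n r)).
    pose proof (dG_neg n (r ^ 2) hn ltac:(apply pow_le; lra)). nra.
  -
    simpl. rewrite (Derive_ext (fun x => Derive (rhoF n) x) (fun r => 2 * r * dG n (r ^ 2))).
    2: { intros t. apply is_derive_unique, rho_derive. }
    assert (HD : is_derive (fun r => 2 * r * dG n (r ^ 2)) 0 (2 * dG n (0 ^ 2))).
    { eapply is_derive_eq.
      apply (is_derive_mult (fun r => 2 * r) (fun r => dG n (r ^ 2))). auto_derive; auto.
      apply Derive_correct. apply (ex_derive_comp (dG n) (fun r => r ^ 2)). apply dG_ex. auto_derive; auto.
      intros; apply Rmult_comm.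
      rsimpl. ring. }
    replace (Derive (fun r => 2 * r * dG n (r ^ 2)) 0) with (2 * dG n (0 ^ 2)) by (symmetry; apply is_derive_unique; exact HD).
    pose proof (dG_neg n (0 ^ 2) hn ltac:(simpl; lra)). lra.
  - intros r Hr. unfold rhoF, G. rewrite gg_high.
    2: { replace 1 with (1 ^ 2) by ring. apply pow_incr; lra. }
    rewrite Rpow2 by lra. rewrite Rpower_mult. f_equal. unfold bb. field. lra.
  - intros r Hr.
    set (f := fun s => - hh n (s ^ 2)).
    assert (Hint : forall s, / s ^ 2 * mass (rhoF n) s * rhoF n s = s * G n (s ^ 2) * mu n (s ^ 2)).
    { intros s. rewrite mass_eq. unfold rhoF. destruct (Req_dec s 0) as [E|E].
      - subst s. simpl. ring.
      - field. auto. }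
    assert (HDf : forall s, is_derive f s (s * G n (s ^ 2) * mu n (s ^ 2))).
    { intros s. unfold f. eapply is_derive_eq. apply (is_derive_opp (fun r => hh n (r ^ 2))), p_derive.
      rsimpl. ring. }
    assert (HDe : forall s, Derive f s = s * G n (s ^ 2) * mu n (s ^ 2)).
    { intros s. apply is_derive_unique, HDf. }
    assert (Hc : forall s, continuous (fun s => s * G n (s ^ 2) * mu n (s ^ 2)) s).
    { intros s. apply Ck1_cont. apply Ck_mult. apply open_Rall. apply Ck_mult. apply open_Rall.
      apply Ck_id, open_Rall.
      apply (Ck_comp Rall Rall 1 open_Rall open_Rall (G n) (fun s => s ^ 2)). intros; exact I. apply Ck_G. apply Ck_pow, open_Rall.
      apply (Ck_comp Rall Rall 1 open_Rall open_Rall (mu n) (fun s => s ^ 2)). intros; exact I. apply Ck_mu. apply Ck_pow, open_Rall. }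
    apply (is_RInt_gen_ext (Derive f)).
    + apply filter_forall. intros ab x _. rewrite HDe, Hint. reflexivity.
    + replace (hh n (r ^ 2)) with (0 - f r) by (unfold f; ring).
      apply is_RInt_gen_Derive.
      * apply filter_forall. intros ab x _. eexists; apply HDf.
      * apply filter_forall. intros ab x _. apply (continuous_ext (fun s => s * G n (s ^ 2) * mu n (s ^ 2))).
        intros t; rewrite HDe; reflexivity. apply Hc.
      * intros P HP. apply locally_singleton in HP. exact HP.
      * assert (HL : is_lim f p_infty 0).
        { apply (is_lim_ext_loc (fun s => (- CC n) * Rpower s (2 * (1 - 2 * bb n)))).
          - exists 1. intros s Hs. unfold f. rewrite (hh_high n (s ^ 2) hn).
            2: { replace 1 with (1 ^ 2) by ring. apply pow_incr; lra. }
            rewrite Rpow2 by lra. rewrite Rpower_mult. ring.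
          - replace (Finite 0) with (Rbar_mult (- CC n) 0).
            apply is_lim_scal_l, Rpower_lim_neg. lra.
            simpl. f_equal. ring. }
        exact HL.
  - intros r Hr. eapply is_derive_eq. apply p_derive.
    rewrite mass_eq. unfold rhoF. rsimpl. field. lra.
  - exists (fun x => hh n (ginv n x)). rewrite Hrho0, Hrho1.
    split; [|split; [|split]].
    + apply Ck_smooth_on. intros k. apply Ck_ginv_comp; auto.
      apply (Ck_sub Rall). intros; exact I. apply Ck_hh.
    + intros x Hx. destruct (ginv_spec n x hn Hx) as [HT _].
      rewrite (Derive_comp (hh n) (ginv n)).
      2: { eexists; apply hh_derive. }
      2: { eexists; apply ginv_derive; auto. }
      rewrite (is_derive_unique _ _ _ (ginv_derive n x hn Hx)).
      rewrite (is_derive_unique _ _ _ (hh_derive n (ginv n x))).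
      pose proof (dG_neg n (ginv n x) hn ltac:(lra)). pose proof (G_pos n (ginv n x) hn).
      pose proof (mu_pos n (ginv n x) hn ltac:(lra)).
      assert (/ dG n (ginv n x) < 0) by (apply Rinv_lt_0_compat; lra).
      assert (0 < G n (ginv n x) * mu n (ginv n x) / 2) by (apply Rdiv_lt_0_compat; [apply Rmult_lt_0_compat|]; lra).
      nra.
    + intros r Hr. unfold rhoF. rewrite ginv_G; auto. apply pow_lt; lra.
    + intros x Hx. set (T := Rpower x (- / bb n)).
      assert (HT : 1 < T).
      { unfold T, Rpower. rewrite <- exp_0. apply exp_increasing.
        assert (ln x < 0) by (rewrite <- ln_1; apply ln_increasing; lra).
        assert (0 < / bb n) by (apply Rinv_0_lt_compat; lra). nra. }
      assert (HGT : G n T = x).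
      { unfold G. rewrite gg_high by lra. unfold T. rewrite Rpower_mult.
        replace (- / bb n * - bb n) with 1 by (field; lra). apply Rpower_1; lra. }
      rewrite <- HGT at 1. rewrite ginv_G by (auto; lra). rewrite hh_high by lra.
      unfold T. rewrite Rpower_mult. unfold CC. f_equal. f_equal. unfold bb. field. lra.
  - intros r Hr. rewrite mass_high by (auto; lra). unfold M0. rewrite ee_eq by auto. ring.
  -
    apply (is_lim_ext_loc (fun r => (4 * PI * M0 n) * Rpower r (ee n))).
    + exists 1. intros r Hr. rewrite mass_high by (auto; lra). ring.
    + replace (Rbar.p_infty) with (Rbar_mult (4 * PI * M0 n) p_infty) at 2.
      apply is_lim_scal_l, Rpower_lim_pos, ee_pos, hn.
      pose proof PI_RGT_0. pose proof (M0_gt1 n hn).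
      simpl. destruct (Rle_dec 0 (4 * PI * M0 n)) as [H1|H1]; [|exfalso; nra].
      destruct (Rle_lt_or_eq_dec 0 _ H1); [reflexivity|exfalso; nra].
Qed.
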